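(* Let $F$ be an unsatisfiable formula and $\mathcal{P}$ a subproblem for $F$ admitting a compatible proof. Then every compatible proof $(L^0,\dots,L^n)$ of $\mathcal{P}$ contains at least $$\min\{\#S - 1 \mid S \subseteq \mathrm{Frontier}[\mathrm{Known}(\mathcal{P})],\ S \text{ is unsatisfiable}\}$$ clauses in $L^0 \cup \cdots \cup L^n$ that do not belong to $\mathrm{Known}(\mathcal{P})$.
   Context: Clauses are finite sets of literals without complementary pairs; $\bot$ is the empty clause; a formula (set of clauses) is unsatisfiable if no truth assignment satisfies all its clauses. Resolution: for $A = C' \cup \{x\}$, $B = C'' \cup \{\bar{x}\}$ with $C' \cup C''$ containing no complementary pair, $A \diamond B := C' \cup C''$. The frontier of a set of clauses $G$ is $\mathrm{Frontier}[G] := \{\omega \in G \mid \text{there is no } \omega' \in G \text{ with } \omega' \subsetneq \omega\}$. Layer list on an unsatisfiable formula $F$: a sequence $(L^0,\dots,L^n)$, $n\ge 1$, of sets of clauses with $L^j\neq\emptyset$ for $j \ge 1$, such that (1) $L^0 = F$; (2) $\bot \in L^k$ for some $1 \le k \le n$; (3) for all $1\le j\le n$, every $\omega \in L^j$ equals $\omega'\diamond\omega''$ for some $\omega' \in L^{j-1}$, $\omega'' \in L^0\cup\cdots\cup L^{j-1}$; (4) for all $1 \le k < j \le n$, no $\omega \in L^j$ equals $\omega'\diamond\omega''$ with $\omega' \in L^{k-1}$, $\omega'' \in L^0\cup\cdots\cup L^{k-1}$. A subproblem for $F$ is a tuple $\mathcal{P} = (\mathrm{Prev}, \mathrm{Cur},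 \mathrm{Next}, \mathrm{Forg})$ of four sets of clauses; $\mathrm{Known}(\mathcal{P}) = \mathrm{Prev} \cup \mathrm{Cur} \cup \mathrm{Next}$. A compatible proof of $\mathcal{P}$ is a layer list $(L^0,\dots,L^n)$ on $F$ such that for some index $k < n$: $L^k = \mathrm{Cur}$, $L^0 \cup \cdots \cup L^{k-1} = \mathrm{Prev}$, $L^{k+1} \supseteq \mathrm{Next}$, and no clause of $\mathrm{Forg}$ occurs in any layer. *)

(* Defs.v *)
From HB Require Import structures.
From mathcomp Require Import all_boot all_order.
From mathcomp Require Import finmap.
From Stdlib Require Import ClassicalEpsilon.
Set Implicit Arguments. Unset Strict Implicit. Unset Printing Implicit Defensive.
Local Open Scope fset_scope.

(* Propositional variables range over an arbitrary choiceType V.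
   A literal is a pair (v, b): b = true is the positive literal v,
   b = false the negative literal ~v. *)
Definition lit (V : choiceType) := (V * bool)%type.
Definition negl (V : choiceType) (x : lit V) : lit V := (x.1, ~~ x.2).

Definition clause (V : choiceType) := {fset lit V}.
Definition no_comp_pair (V : choiceType) (C : clause V) : Prop :=
  forall x, x \in C -> negl x \notin C.
Definition is_clause_set (V : choiceType) (G : {fset clause V}) : Prop :=
  forall C, C \in G -> no_comp_pair C.

Definition bot_clause (V : choiceType) : clause V := fset0.

Definition sat_clause (V : choiceType) (a : V -> bool) (C : clause V) : Prop :=
  exists2 x, x \in C & a x.1 = x.2.
Definition unsat (V : choiceType) (G : {fset clause V}) : Prop :=
  forall a : V -> bool, exists2 C, C \in G & ~ sat_clause a C.

Definition resolvent (V : choiceType) (A B C : clause V) : Prop :=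
  exists x : lit V, [/\ x \in A, negl x \in B,
    no_comp_pair ((A `\ x) `|` (B `\ negl x)) &
    C = (A `\ x) `|` (B `\ negl x)].

Definition frontier (V : choiceType) (G : {fset clause V}) : {fset clause V} :=
  [fset w in G | ~~ has (fun w' => w' `<` w) G].

(* Layer list: L = [:: L^0; ...; L^n], n = size L - 1. *)
Definition layer (V : choiceType) (L : seq {fset clause V}) (j : nat) :=
  nth fset0 L j.
Definition layers_below (V : choiceType) (L : seq {fset clause V}) (j : nat)
  : {fset clause V} := \bigcup_(i <- iota 0 j) layer L i.
Definition all_layers (V : choiceType) (L : seq {fset clause V}) : {fset clause V} :=
  \bigcup_(X <- L) X.

Definition is_layer_list (V : choiceType) (F : {fset clause V})
  (L : seq {fset clause V}) : Prop :=
  let n := (size L).-1 in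
  [/\ (1 <= n /\ forall j, 1 <= j <= n -> layer L j != fset0),
      layer L 0 = F,
      (exists k, 1 <= k <= n /\ bot_clause V \in layer L k),
      (forall j, 1 <= j <= n -> forall w, w \in layer L j ->
         exists w' w'', [/\ w' \in layer L j.-1, w'' \in layers_below L j &
                            resolvent w' w'' w]) &
      (forall k j, 1 <= k -> k < j -> j <= n -> forall w, w \in layer L j ->
         ~ exists w' w'', [/\ w' \in layer L k.-1, w'' \in layers_below L k &
                              resolvent w' w'' w])].

Record subproblem (V : choiceType) := Subproblem {
  Prev : {fset clause V}; Cur : {fset clause V};
  Next : {fset clause V}; Forg : {fset clause V} }.
Definition Known (V : choiceType) (P : subproblem V) : {fset clause V} :=
  Prev P `|` Cur P `|` Next P.

Definition compatible_proof (V : choiceType) (F : {fset clause V})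
  (P : subproblem V) (L : seq {fset clause V}) : Prop :=
  is_layer_list F L /\
  exists k, [/\ k < (size L).-1, layer L k = Cur P,
    layers_below L k = Prev P, Next P `<=` layer L k.+1 &
    forall j, j <= (size L).-1 -> [disjoint Forg P & layer L j]].

(* Subsets that
   are not unsatisfiable contribute the value #|Frontier|, an upper bound for
   every candidate #S - 1, so they never lower the minimum; likewise the
   neutral element #|Frontier| is irrelevant whenever some candidate exists. *)
Definition min_unsat_frontier (V : choiceType) (P : subproblem V) : nat :=
  let Fr := frontier (Known P) in
  \big[minn/#|` Fr|]_(S <- fpowerset Fr)
     (if excluded_middle_informative (unsat S) then #|` S| - 1 else #|` Fr|).

(* Main.v *)
Require Import Defs.
From mathcomp Require Import all_boot all_order finmap.
From Stdlib Require Import Classical.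
From mathcomp Require Import zify.
Local Open Scope fset_scope.
Set Implicit Arguments.

Section S.
Variable V : choiceType.
Implicit Types (G N S : {fset clause V}) (A B C : clause V).

Lemma sat_resolvent a A B C : resolvent A B C -> sat_clause a A -> sat_clause a B -> sat_clause a C.
Proof.
move=> [x [xA nxB _ ->]] [y yA ay] [z zB az].
case: (eqVneq y x) => [exy | nexy]; last first.
  by exists y => //; rewrite in_fsetU !in_fsetD1 nexy yA.
case: (eqVneq z (negl x)) => [ezx | nezx]; last first.
  by exists z => //; rewrite in_fsetU !in_fsetD1 nezx zB orbT.
exfalso; move: az; rewrite ezx -exy /negl /= ay; by case: (y.2).
Qed.

Lemma sat_sub a A B : A `<=` B -> sat_clause a A -> sat_clause a B.
Proof. by move=> /fsubsetP sAB [x xA ax]; exists x => //; apply: sAB. Qed.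

Lemma in_frontier G w : (w \in frontier G) = (w \in G) && ~~ has (fun w' => w' `<` w) G.
Proof. by rewrite /frontier !inE. Qed.

Lemma exists_frontier G A : A \in G -> exists A', A' \in frontier G /\ A' `<=` A.
Proof.
move: {2}#|` A| (leqnn #|` A|) => m; elim: m A => [|m IH] A hm AG.
  move: hm; rewrite leqn0 cardfs_eq0 => /eqP A0; exists A; split => //.
  rewrite in_frontier AG /=; apply/hasP => -[w' _]; rewrite A0 fproperEneq.
  by case/andP => ne; rewrite fsubset0 (negbTE ne).
case hA: (has (fun w' => w' `<` A) G).
  move/hasP: hA => [w' w'G pw].
  have [A' [fA' sA']] := IH w' (leq_trans (fproper_ltn_card pw) hm) w'G.
  exists A'; split => //; apply: fsubset_trans sA' _; by move: pw; rewrite fproperEneq => /andP[].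
by exists A; rewrite in_frontier AG hA fsubset_refl.
Qed.

Lemma frontier_sub G n x : x \in frontier (n |` G) -> x != n -> x \in frontier G.
Proof.
rewrite !in_frontier in_fsetU in_fset1 => /andP[/orP[/eqP->|xG] hn] nx.
  by rewrite eqxx in nx.
rewrite xG /=; apply: contra hn => /hasP[w wG pw]; apply/hasP; exists w => //.
by rewrite in_fsetU wG orbT.
Qed.

Lemma step G n A B S' : A \in G -> B \in G -> resolvent A B n ->
  S' `<=` frontier (n |` G) -> unsat S' ->
  exists S, [/\ S `<=` frontier G, unsat S & #|` S| <= #|` S'|.+1].
Proof.
move=> AG BG rn /fsubsetP sS' uS'.
case nS: (n \in S'); last first.
  exists S'; split => //.
  apply/fsubsetP => x xS; apply: frontier_sub (sS' _ xS) _.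
  by apply: contraFneq nS => <-.
have [A' [fA' sA']] := @exists_frontier G A AG.
have [B' [fB' sB']] := @exists_frontier G B BG.
exists ((S' `\ n) `|` [fset A'; B']); split.
- apply/fsubsetP => x; rewrite in_fsetU in_fsetD1 in_fset2.
  case/orP => [/andP[xn xS]|/orP[]/eqP->//].
  exact: frontier_sub (sS' _ xS) xn.
- move=> a; have [C CS nC] := uS' a.
  case: (eqVneq C n) => [eCn|nCn]; last first.
    by exists C => //; rewrite in_fsetU in_fsetD1 nCn CS.
  case: (classic (sat_clause a A')) => hA; last first.
    by exists A' => //; rewrite in_fsetU in_fset2 eqxx orbT.
  case: (classic (sat_clause a B')) => hB; last first.
    by exists B' => //; rewrite in_fsetU in_fset2 eqxx !orbT.
  exfalso; apply: nC; rewrite eCn; apply: (sat_resolvent rn).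
    exact: sat_sub sA' hA.
  exact: sat_sub sB' hB.
- rewrite cardfsU (cardfsD1 n S') nS cardfs2.
  apply: leq_trans (leq_subr _ _) _.
  by rewrite add1n addnS ltnS -addn1 leq_add2l; case: (A' != B').
Qed.

Lemma gen (r : clause V -> nat) m : forall G N, #|` N `\` G| <= m ->
  bot_clause V \in G `|` N ->
  (forall w, w \in N -> w \notin G -> exists A B, [/\ resolvent A B w,
      A \in G \/ (A \in N /\ r A < r w) & B \in G \/ (B \in N /\ r B < r w)]) ->
  exists S, [/\ S `<=` frontier G, unsat S & #|` S| <= #|` N `\` G|.+1].
Proof.
have base G N : N `\` G = fset0 -> bot_clause V \in G `|` N ->
    exists S, [/\ S `<=` frontier G, unsat S & #|` S| <= #|` N `\` G|.+1].
  move=> e0 hb.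
  have bG : bot_clause V \in G.
    move: hb; rewrite in_fsetU => /orP[//|bN].
    case bG: (bot_clause V \in G) => //.
    by have := in_fset0 (bot_clause V); rewrite -e0 in_fsetD bG bN.
  exists [fset bot_clause V]; split.
  - apply/fsubsetP => x; rewrite in_fset1 => /eqP->.
    rewrite in_frontier bG /=; apply/hasP => -[w _].
    by rewrite fproperEneq fsubset0 => /andP[/negbTE->].
  - by move=> a; exists (bot_clause V); rewrite ?in_fset1 // => -[y]; rewrite in_fset0.
  - by rewrite cardfs1.
elim: m => [|m IH] G N hm hb hw.
  by apply: base => //; apply/eqP; rewrite -cardfs_eq0 -leqn0.
case: (fset_0Vmem (N `\` G)) => [e0|[w0 w0N]]; first exact: base.
pose P k := has (fun w => r w == k) (N `\` G).
have exP : exists k, P k by exists (r w0); apply/hasP; exists w0.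
case: (ex_minnP exP) => k /hasP[w wNG /eqP rwk] mink.
move: (wNG); rewrite in_fsetD => /andP[wG wN].
have [A [B [rw hA hB]]] := hw w wN wG.
have inG X : X \in G \/ (X \in N /\ r X < r w) -> X \in G.
  case=> [//|[XN lt]]; case XG: (X \in G) => //.
  have : k <= r X by apply: mink; apply/hasP; exists X; rewrite ?in_fsetD ?XG.
  by rewrite -rwk leqNgt lt.
have ecard : #|` N `\` G| = #|` N `\` (w |` G)|.+1.
  by rewrite (cardfsD1 w (N `\` G)) wNG fsetDDl fsetUC.
have [S' [sS' uS' cS']] : exists S', [/\ S' `<=` frontier (w |` G), unsat S' &
    #|` S'| <= #|` N `\` (w |` G)|.+1].
  apply: IH.
  - by rewrite -ltnS -ecard.
  - by move: hb; rewrite !in_fsetU => /orP[->|->]; rewrite ?orbT.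
  - move=> w2 w2N; rewrite in_fsetU negb_or => /andP[_ w2G].
    have [A2 [B2 [r2 h2A h2B]]] := hw w2 w2N w2G.
    exists A2, B2; split => //.
      by case: h2A => [X|]; [left; rewrite in_fsetU X orbT|right].
    by case: h2B => [X|]; [left; rewrite in_fsetU X orbT|right].
have [S [sS uS cS]] := @step G w A B S' (inG _ hA) (inG _ hB) rw sS' uS'.
by exists S; split => //; rewrite ecard; apply: leq_trans cS _.
Qed.
End S.

Lemma bigmin_le (T : eqType) (s : seq T) (f : T -> nat) d x : x \in s ->
  \big[minn/d]_(y <- s) f y <= f x.
Proof.
elim: s => //= a s IH; rewrite in_cons big_cons => /orP[/eqP->|xs].
  exact: geq_minl.
exact: leq_trans (geq_minr _ _) (IH xs).
Qed.

Lemma find_le (T : Type) (a : pred T) (s : seq T) x0 i : a (nth x0 s i) -> find a s <= i.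
Proof. by move=> h; rewrite leqNgt; apply/negP => /(before_find x0); rewrite h. Qed.

Theorem lemma2 (V : choiceType) (F : {fset clause V}) (P : subproblem V) :
  is_clause_set F -> unsat F ->
  is_clause_set (Prev P) -> is_clause_set (Cur P) ->
  is_clause_set (Next P) -> is_clause_set (Forg P) ->
  (exists L0, compatible_proof F P L0) ->
  forall L : seq {fset clause V}, compatible_proof F P L ->
    min_unsat_frontier P <= #|` all_layers L `\` Known P|.
Proof.
move=> _ _ _ _ _ _ _ L [[[n1 nz] L0 [kb [hkb bk]] hres _] [k [hk Lk Lb _ _]]].
have memAL w X : X \in L -> w \in X -> w \in all_layers L.
  by move=> XL wX; apply/bigfcupP; exists X; rewrite ?XL.
have lay i : i < size L -> layer L i \in L by move=> hi; apply: mem_nth.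
have L0K x : x \in layer L 0 -> x \in Known P.
  move=> x0; rewrite /Known !in_fsetU; case: k hk Lk Lb => [|k'] hk Lk Lb.
    by rewrite -Lk x0 orbT.
  rewrite -Lb; apply/orP; left; apply/orP; left.
  by apply/bigfcupP; exists 0 => //; rewrite mem_iota.
pose r (w : clause V) := find (fun X : {fset clause V} => w \in X) L.
have hb : bot_clause V \in Known P `|` all_layers L.
  rewrite in_fsetU; apply/orP; right; apply: (memAL _ (layer L kb)) => //.
  by apply: lay; case/andP: hkb => _ h; move: h n1; clear; lia.
have hw : forall w, w \in all_layers L -> w \notin Known P -> exists A B, [/\ resolvent A B w,
      A \in Known P \/ (A \in all_layers L /\ r A < r w) & B \in Known P \/ (B \in all_layers L /\ r B < r w)].
  move=> w wN wK.
  have hasw : has (fun X : {fset clause V} => w \in X) L.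
    by case/bigfcupP: wN => X /andP[XL _] wX; apply/hasP; exists X.
  have jlt : r w < size L by rewrite /r -has_find.
  have wj : w \in layer L (r w) := nth_find fset0 hasw.
  have j0 : 0 < r w.
    rewrite lt0n; apply/negP => /eqP j0; move: wj; rewrite j0 => /L0K.
    by rewrite (negbTE wK).
  have jn : 1 <= r w <= (size L).-1 by move: j0 jlt; clear; lia.
  have [w' [w'' [w'in w''in res]]] := hres (r w) jn w wj.
  have rlt X i : i < r w -> X \in layer L i -> X \in Known P \/ (X \in all_layers L /\ r X < r w).
    move=> ij Xi; case XK: (X \in Known P); [by left|right]; split.
      by apply: (memAL _ (layer L i)) => //; apply: lay; apply: ltn_trans ij jlt.
    by apply: leq_ltn_trans ij; exact: find_le Xi.
  exists w', w''; split => //.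
    by apply: (rlt _ (r w).-1) => //; rewrite prednK.
  case/bigfcupP: w''in => i /andP[]; rewrite mem_iota /= => ij _ hi.
  exact: rlt hi.
have [S [sS uS cS]] := @gen V r _ (Known P) (all_layers L) (leqnn _) hb hw.
rewrite /min_unsat_frontier.
have Sin : S \in fpowerset (frontier (Known P)) by rewrite fpowersetE.
apply: leq_trans; first by apply: bigmin_le; exact: Sin.
case: ClassicalEpsilon.excluded_middle_informative => //= _.
by rewrite leq_subLR add1n.
Qed.
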